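(* Let $n\ge4$, let $\textnormal{Reg}(\mathcal{OCT}_n)$ be the set of regular elements of $\mathcal{OCT}_n$ and $L(n,n-1)=\{\alpha\in\textnormal{Reg}(\mathcal{OCT}_n):|\textnormal{Im}\,\alpha|\le n-1\}$. Then the rank of the semigroup $L(n,n-1)$ is $2$.
   Context: $\mathcal{T}_n$ is the full transformation semigroup on $[n]=\{1,\dots,n\}$ under composition. $\alpha$ is a contraction if $|x\alpha-y\alpha|\le|x-y|$ for all $x,y$, order-preserving if $x\le y\Rightarrow x\alpha\le y\alpha$. $\mathcal{OCT}_n$ is the semigroup of order-preserving contractions; $\alpha\in\mathcal{OCT}_n$ is regular if $\alpha\beta\alpha=\alpha$ for some $\beta\in\mathcal{OCT}_n$. The rank of a semigroup is the minimum cardinality of a generating set. *)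

(* Defs.v *)
From mathcomp Require Import all_boot.
Set Implicit Arguments. Unset Strict Implicit. Unset Printing Implicit Defensive.

(* Full transformations of [n] = {1..n}, modelled on 'I_n = {0..n-1}
   (a shift by one preserves order and distances). *)
Definition trans (n : nat) := {ffun 'I_n -> 'I_n}.

(* Composition with maps acting on the right: x (a b) = (x a) b. *)
Definition tcomp n (a b : trans n) : trans n := [ffun x => b (a x)].

Definition distn (x y : nat) : nat := (x - y) + (y - x).

Definition order_preserving n (a : trans n) : bool :=
  [forall x : 'I_n, forall y : 'I_n, (x <= y) ==> (a x <= a y)].

Definition contraction n (a : trans n) : bool :=
  [forall x : 'I_n, forall y : 'I_n, distn (a x) (a y) <= distn x y].

Definition OCT n : {set trans n} :=
  [set a | order_preserving a && contraction a].

Definition regular_OCT n (a : trans n) : bool :=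
  [exists b in OCT n, tcomp (tcomp a b) a == a].

Definition RegOCT n : {set trans n} := [set a in OCT n | regular_OCT a].

Definition im n (a : trans n) : {set 'I_n} := [set a x | x in 'I_n].

Definition L n (r : nat) : {set trans n} := [set a in RegOCT n | #|im a| <= r].

Definition word_prod n (x : trans n) (s : seq (trans n)) : trans n :=
  foldl (@tcomp n) x s.

Definition in_generated n (A : {set trans n}) (f : trans n) : Prop :=
  exists (x : trans n) (s : seq (trans n)),
    x \in A /\ all (fun y => y \in A) s /\ f = word_prod x s.

Definition generates n (A S : {set trans n}) : Prop :=
  forall f, f \in S <-> in_generated A f.

Definition has_rank n (S : {set trans n}) (r : nat) : Prop :=
  (exists A : {set trans n}, generates A S /\ #|A| = r) /\
  (forall A : {set trans n}, generates A S -> r <= #|A|).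

(* Main.v *)
Require Import Defs.
From mathcomp Require Import all_boot.
From mathcomp Require Import zify.

Section S.
Variable m : nat.
Local Notation n := m.+1.

Definition Pg (R : nat) (f : trans n) := exists k a r,
  [/\ 0 < r, r <= R, k + r <= n, a + r <= n &
      forall x : 'I_n, val (f x) = a + minn (x - k) (r - 1)].

Lemma Pg_OCT R f : Pg R f -> f \in OCT n.
Proof.
case=> k [a [r [r0 rR kr ar E]]].
rewrite inE /order_preserving /contraction; apply/andP; split;
  apply/forallP=> x; apply/forallP=> y.
- apply/implyP=> h; rewrite !E; lia.
- rewrite /distn !E; lia.
Qed.

Lemma Pg_L f : Pg m f -> f \in L n m.
Proof.
move=> P; have O := @Pg_OCT _ _ P.
case: P => k [a [r [r0 rR kr ar E]]].
rewrite inE; apply/andP; split.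
  rewrite inE O /=.
  pose b : trans n := [ffun y : 'I_n => inord (k + minn (y - a) (r - 1)) : 'I_n].
  have vb y : val (b y) = k + minn (y - a) (r - 1).
    rewrite ffunE /= inordK //; lia.
  have Pb : Pg n b by exists a, k, r; split => //; lia.
  apply/existsP; exists b; rewrite (@Pg_OCT _ _ Pb) /=.
  apply/eqP/ffunP => x; rewrite /tcomp !ffunE; apply/val_inj => /=.
  rewrite !E inordK; lia.
rewrite cardE.
have U : uniq (map val (enum (im f))).
  by rewrite (map_inj_uniq val_inj) enum_uniq.
have sub : {subset map val (enum (im f)) <= iota a r}.
  move=> v /mapP [y]; rewrite mem_enum => /imsetP [x _ ->] ->.
  rewrite mem_iota E; lia.
rewrite -(size_map val); apply: leq_trans (uniq_leq_size U sub) _; by rewrite size_iota.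
Qed.

Definition u : trans n := [ffun x : 'I_n => inord (minn x.+1 m)].
Definition d : trans n := [ffun x : 'I_n => inord (x.-1)].

Lemma uE x : val (u x) = minn x.+1 m.
Proof. rewrite ffunE /= inordK //; have := ltn_ord x; lia. Qed.
Lemma dE x : val (d x) = x.-1.
Proof. rewrite ffunE /= inordK //; have := ltn_ord x; lia. Qed.

Lemma Pg_u : 0 < m -> Pg m u.
Proof. move=> m0; exists 0, 1, m; split; try lia. move=> x; rewrite uE; have := ltn_ord x; lia. Qed.
Lemma Pg_d : 0 < m -> Pg m d.
Proof. move=> m0; exists 1, 0, m; split; try lia. move=> x; rewrite dE; have := ltn_ord x; lia. Qed.

Lemma Pg_d_cl R f : Pg R f -> Pg R (tcomp f d).
Proof.
case=> k [a [r [r0 rR kr ar E]]].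
have vE x : val (tcomp f d x) = (val (f x)).-1 by rewrite ffunE dE.
case: (posnP a) => a0.
  case: (leqP r 1) => r1.
    exists k, 0, 1; split; try lia. by move=> x; rewrite vE E; lia.
  exists k.+1, 0, r.-1; split; try lia. by move=> x; rewrite vE E; lia.
exists k, a.-1, r; split; try lia. by move=> x; rewrite vE E; lia.
Qed.

Lemma Pg_u_cl R f : Pg R f -> Pg R (tcomp f u).
Proof.
case=> k [a [r [r0 rR kr ar E]]].
have vE x : val (tcomp f u x) = minn (val (f x)).+1 m by rewrite ffunE uE.
case: (ltnP (a + r) n) => h.
  exists k, a.+1, r; split; try lia. by move=> x; rewrite vE E; lia.
case: (leqP r 1) => r1.
  exists k, m, 1; split; try lia. by move=> x; rewrite vE E; lia.
exists k, a.+1, r.-1; split; try lia. by move=> x; rewrite vE E; lia.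
Qed.

Definition app (z : 'I_n) (g : trans n) : 'I_n := g z.

Lemma word_eval x s z : word_prod x s z = foldl app z (x :: s).
Proof.
elim: s x => [|y s IH] x //=.
by rewrite IH /= /app /tcomp ffunE.
Qed.

Lemma gen_P f : 0 < m -> in_generated [set u; d] f -> Pg m f.
Proof.
move=> m0 [x [s [xA [sA ->]]]].
have cl : forall y, y \in [set u; d] -> forall g, Pg m g -> Pg m (tcomp g y).
  by move=> y /set2P [] -> g Pg'; [apply: Pg_u_cl | apply: Pg_d_cl].
have Px : Pg m x by move: xA => /set2P [] ->; [apply: Pg_u | apply: Pg_d].
elim: s x Px sA {xA} => [|y s IH] x Px //= /andP [yA sA].
by apply: IH => //; apply: cl.
Qed.

Lemma foldl_d j z : val (foldl app z (nseq j d)) = z - j.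
Proof.
elim: j z => [|j IH] z /=; first by rewrite subn0.
rewrite IH /app dE; lia.
Qed.

Lemma foldl_u j z : val (foldl app z (nseq j u)) = minn (z + j) m.
Proof.
elim: j z => [|j IH] z /=; first by rewrite addn0; have := ltn_ord z; lia.
rewrite IH /app uE; lia.
Qed.

Lemma gen_seq w : all (fun y => y \in [set u; d]) w -> w != [::] ->
  in_generated [set u; d] [ffun z => foldl app z w].
Proof.
case: w => [//|x s] /= /andP [xA sA] _.
exists x, s; split => //; split => //.
by apply/ffunP => z; rewrite ffunE word_eval.
Qed.

Lemma P_gen f : Pg m f -> in_generated [set u; d] f.
Proof.
case=> k [a [r [r0 rm kr ar E]]].
set w := nseq k d ++ nseq (n - r) u ++ nseq (n - r - a) d.
have -> : f = [ffun z => foldl app z w].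
  apply/ffunP => z; rewrite ffunE; apply/val_inj.
  rewrite /w !foldl_cat foldl_d foldl_u foldl_d E.
  have := ltn_ord z; lia.
apply: gen_seq.
  by rewrite /w !all_cat !all_nseq !inE !eqxx !orbT.
rewrite /w -size_eq0 !size_cat !size_nseq; lia.
Qed.

Lemma OCT_nat f : f \in OCT n ->
  (forall x y, x <= y -> y < n -> val (f (inord x)) <= val (f (inord y))) /\
  (forall x y, x < n -> y < n -> distn (f (inord x)) (f (inord y)) <= distn x y).
Proof.
rewrite inE => /andP [/forallP op /forallP ct]; split.
- move=> x y xy yn.
  have := op (inord x) => /forallP /(_ (inord y)) /implyP; apply.
  rewrite !inordK //; lia.
- move=> x y xn yn.
  have := ct (inord x) => /forallP /(_ (inord y)).
  by rewrite !inordK.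
Qed.

Lemma main_nat (F B : nat -> nat) :
  (forall x y, x <= y -> y < n -> F x <= F y) ->
  (forall x y, x < n -> y < n -> distn (F x) (F y) <= distn x y) ->
  (forall x, x < n -> F x < n) ->
  (forall x y, x <= y -> y < n -> B x <= B y) ->
  (forall x y, x < n -> y < n -> distn (B x) (B y) <= distn x y) ->
  (forall x, x < n -> B x < n) ->
  (forall x, x < n -> F (B (F x)) = F x) ->
  F m - F 0 < m ->
  exists k a r, [/\ 0 < r, r <= m, k + r <= n, a + r <= n &
    forall x, x < n -> F x = a + minn (x - k) (r - 1)].
Proof.
move=> Fm Fc Fb Bm Bc Bb Reg Nid.
set a := F 0; set t := F m.
have at' : a <= t by apply: Fm.
have tn : t < n by apply: Fb.
have hit : forall j, j < n -> forall y, a <= y <= F j -> exists2 x, x < n & F x = y.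
  elim=> [|j IH] hj y /andP [h1 h2].
    by exists 0 => //; apply/eqP; rewrite eqn_leq h1 h2.
  case: (leqP y (F j)) => h.
    by apply: IH; [lia | apply/andP; split].
  exists j.+1 => //.
  have := Fc j j.+1 (ltnW hj) hj; have := Fm j j.+1 (leqnSn _) hj.
  rewrite /distn; lia.
have FB : forall y, a <= y <= t -> F (B y) = y.
  move=> y hy; have [x xn <-] := hit m (ltnSn _) y hy; exact: Reg.
have Bstep : forall y, a <= y -> y < t -> B y.+1 = (B y).+1.
  move=> y h1 h2.
  have hne : B y.+1 != B y.
    apply/eqP => E; have := FB y.+1; rewrite E FB; lia.
  have := Bm y y.+1 (leqnSn _) ltac:(lia).
  have := Bc y y.+1 ltac:(lia) ltac:(lia).
  move: hne; rewrite /distn; lia.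
have Bj : forall j, j <= t - a -> B (a + j) = B a + j.
  elim=> [|j IH] hj; first by rewrite !addn0.
  rewrite addnS Bstep ?IH; lia.
have Ban : B a < n by apply: Bb; lia.
have h1 := Bj (t - a) (leqnn _).
have h2 := Bb (a + (t - a)) ltac:(lia).
exists (B a), a, (t - a).+1; split; try lia.
move=> x xn.
have Fa : F (B a) = a by apply: FB; lia.
case: (leqP x (B a)) => hx1.
  have := Fm 0 x (leq0n _) xn; have := Fm x (B a) hx1 Ban.
  rewrite Fa -/a; lia.
case: (leqP (B a + (t - a)) x) => hx2.
  have Ft : F (B a + (t - a)) = t by rewrite -h1 FB; lia.
  have := Fm _ _ hx2 xn; have := Fm x m ltac:(lia) (ltnSn _).
  rewrite Ft -/t; lia.
have := FB (a + (x - B a)) ltac:(lia).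
rewrite Bj; last lia.
have -> : B a + (x - B a) = x by lia.
move=> ->; lia.
Qed.

Lemma L_P f : f \in L n m -> Pg m f.
Proof.
rewrite inE => /andP [H C]; move: H; rewrite inE => /andP [O R].
move: R => /existsP [b /andP [Ob /eqP E]].
have [Fm Fc] := OCT_nat f O; have [Bm Bc] := OCT_nat b Ob.
have Reg : forall x, x < n ->
    (fun x => val (f (inord x))) ((fun x => val (b (inord x))) ((fun x => val (f (inord x))) x))
    = (fun x => val (f (inord x))) x.
  move=> x _ /=; rewrite !inord_val.
  have := congr1 (fun g : trans n => val (g (inord x))) E.
  by rewrite /= /tcomp !ffunE.
have Nid : val (f (inord m)) - val (f (inord 0)) < m.
  rewrite ltnNge; apply/negP => h.
  have Fx : forall x, x < n -> val (f (inord x)) = x.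
    move=> x xn.
    have := Fc x 0 xn (ltn0Sn _); have := Fc m x (ltnSn _) xn.
    have := ltn_ord (f (inord x)); have := ltn_ord (f (inord m)).
    move: h; rewrite /distn /=; lia.
  have imT : im f = setT.
    apply/setP => y; rewrite inE; apply/imsetP; exists y => //.
    by apply/val_inj; have := Fx y (ltn_ord y); rewrite inord_val.
  by move: C; rewrite imT cardsT card_ord ltnn.
have [k [a [r [h1 h2 h3 h4 h5]]]] :=
  @main_nat (fun x => val (f (inord x))) (fun x => val (b (inord x)))
    Fm Fc (fun x (_ : x < n) => ltn_ord (f (inord x))) Bm Bc (fun x (_ : x < n) => ltn_ord (b (inord x))) Reg Nid.
exists k, a, r; split => // x.
by have := h5 x (ltn_ord x); rewrite /= inord_val.
Qed.

Lemma word_iter (g : trans n) s : all (fun y => y \in [set g]) s ->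
  forall z, word_prod g s z = iter (size s).+1 (fun v => g v) z.
Proof.
move=> sA z; rewrite word_eval /=.
have -> : s = nseq (size s) g.
  elim: s sA {z} => [|y s IH] //= /andP [/set1P -> /IH {1}<-] //.
have gen : forall j v, foldl app v (nseq j g) = iter j (fun v => g v) v.
  by elim=> [|j IH] v //=; rewrite IH /app -iterSr.
rewrite size_nseq -iterS iterSr; exact: (gen (size s) (app z g)).
Qed.

Lemma ud_neq : 0 < m -> tcomp u d != tcomp d u.
Proof.
move=> m0; apply/eqP => /(congr1 (fun g : trans n => val (g ord0))).
rewrite /tcomp ffunE [in X in _ = X -> _]ffunE dE uE uE dE /=; lia.
Qed.

End S.

Theorem corollary12 (n : nat) (hn : 4 <= n) : has_rank (L n (n - 1)) 2.
Proof.
case: n hn => [//|m] hn.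
have -> : m.+1 - 1 = m by rewrite subn1.
have m0 : 0 < m by lia.
have uL := @Pg_L m _ (@Pg_u m m0); have dL := @Pg_L m _ (@Pg_d m m0).
split.
  exists [set u m; d m]; split.
    move=> f; split; [move/(@L_P m); exact: P_gen | move/(@gen_P m _ m0); exact: Pg_L].
  rewrite cards2; case: eqP => // E.
  by move: (@ud_neq m m0); rewrite E eqxx.
move=> A gA; rewrite leqNgt; apply/negP => hA.
case: (posnP #|A|) => A0.
  have [x [s [xA _]]] := (gA _).1 uL.
  by move: A0 => /eqP; rewrite cards_eq0 => /eqP A0; rewrite A0 inE in xA.
have /cards1P [g Ag] : #|A| == 1 by lia.
have [x1 [s1 [x1A [s1A E1]]]] := (gA _).1 uL.
have [x2 [s2 [x2A [s2A E2]]]] := (gA _).1 dL.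
rewrite Ag in x1A x2A s1A s2A; move/set1P: x1A => ?; move/set1P: x2A => ?; subst.
move: (@ud_neq m m0); rewrite E1 E2; apply/negP; rewrite negbK; apply/eqP/ffunP => z.
by rewrite /tcomp !ffunE !word_iter // -!iterD addnC.
Qed.
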